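(* Let $0<\eta\le1/8$, $0<\delta<1$, and let $(q_1,\dots,q_n)$ be a probability distribution on $[n]$ (e.g. the diagonal of a density matrix $\tilde\rho$). Let $m=2.13\,\eta^{-2}(n\ln2+\ln(1/\delta))$, draw $N\sim\mathrm{Pois}(m)$, then draw $N$ independent samples from $(q_i)$, let $N_i$ be the number of samples equal to $i$, and set $\hat q_i=N_i/m$. Then with probability at least $1-\delta$, $\sum_{i=1}^n|q_i-\hat q_i|\le\eta$.
   Context: In the paper the samples are outcomes of measuring prepared copies of the state $\tilde\rho$ in the computational basis, so $q_i=\tilde\rho_{ii}$; the estimate divides by the expected number $m$ of samples, not by $N$. *)

(* Defs.v *)
From HB Require Import structures.
From mathcomp Require Import all_boot all_order all_algebra.
From mathcomp Require Import all_classical all_reals all_analysis.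
Set Implicit Arguments. Unset Strict Implicit. Unset Printing Implicit Defensive.
Import Order.TTheory GRing.Theory Num.Theory.
Local Open Scope ring_scope.

(* A run of the sampling procedure with N samples: the sequence of outcomes
   s : 'I_N -> 'I_n.  N_i = number of samples equal to i. *)
Definition sample_count (n N : nat) (s : {ffun 'I_N -> 'I_n}) (i : 'I_n) : nat :=
  #|[set j | s j == i]|.

Definition sample_prob (R : realType) (n N : nat) (q : 'I_n -> R)
  (s : {ffun 'I_N -> 'I_n}) : R := \prod_(j < N) q (s j).

Definition qhat (R : realType) (n N : nat) (m : R) (s : {ffun 'I_N -> 'I_n})
  (i : 'I_n) : R := (sample_count s i)%:R / m.

Definition good_event (R : realType) (n N : nat) (q : 'I_n -> R) (m eta : R)
  (s : {ffun 'I_N -> 'I_n}) : bool :=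
  \sum_(i < n) `|q i - qhat m s i| <= eta.

Definition m_of (R : realType) (n : nat) (eta delta : R) : R :=
  (213%:R / 100%:R) * eta ^-2 * (n%:R * ln 2 + ln (delta^-1)).

(* Probability of the good event under: N ~ Pois(m), then N i.i.d. samples
   from q.  Total probability formula over N (a series of nonneg. terms,
   taken in the extended reals). *)
Definition success_prob (R : realType) (n : nat) (q : 'I_n -> R) (m eta : R)
  : \bar R :=
  (\sum_(0 <= N <oo)
     (poisson_pmf m N *
       \sum_(s : {ffun 'I_N -> 'I_n} | good_event q m eta s) sample_prob q s)%:E)%E.

(* Main.v *)
Require Import Defs.
From HB Require Import structures.
From mathcomp Require Import all_boot all_order all_algebra.
From mathcomp Require Import all_classical all_reals all_analysis.
From mathcomp Require Import ring lra.
Import Order.TTheory GRing.Theory Num.Theory.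
Local Open Scope ring_scope.
Set Implicit Arguments. Unset Strict Implicit.

Definition sg (R : realType) (n : nat) (σ : {ffun 'I_n -> bool}) (i : 'I_n) : R :=
  if σ i then 1 else -1.
Arguments sg {R n}.

Lemma count_sum (R : realType) n N (s : {ffun 'I_N -> 'I_n}) (g : 'I_n -> R) :
  \sum_i g i * (sample_count s i)%:R = \sum_j g (s j).
Proof.
rewrite (partition_big s xpredT) //=; apply: eq_bigr => i _.
rewrite (eq_bigr (fun _ => g i)); last by move=> j /eqP->.
rewrite sumr_const mulr_natr /sample_count; congr (_ *+ _).
by apply: eq_card => j; rewrite !inE.
Qed.

Lemma dist_sum (R : realType) n N (F : 'I_n -> R) :
  \sum_(s : {ffun 'I_N -> 'I_n}) \prod_j F (s j) = (\sum_i F i) ^+ N.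
Proof. by rewrite -(bigA_distr_bigA (fun (_ : 'I_N) i => F i)) /= prodr_const card_ord. Qed.

Lemma sample_prob_ge0 (R : realType) n N (q : 'I_n -> R) (s : {ffun 'I_N -> 'I_n}) :
  (forall i, 0 <= q i) -> 0 <= sample_prob q s.
Proof. by move=> q0; apply: prodr_ge0 => j _. Qed.

Definition Ef (R : realType) n N (q : 'I_n -> R) (m eta u : R)
  (σ : {ffun 'I_n -> bool}) (s : {ffun 'I_N -> 'I_n}) : R :=
  expR (u * (\sum_i sg σ i * ((sample_count s i)%:R - m * q i) - m * eta)).

Lemma bad_le (R : realType) n N (q : 'I_n -> R) (m eta u : R) (s : {ffun 'I_N -> 'I_n}) :
  0 < m -> 0 < u -> ~~ good_event q m eta s ->
  1 <= \sum_σ Ef q m eta u σ s.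
Proof.
move=> m0 u0 ng.
pose σ0 : {ffun 'I_n -> bool} := [ffun i => m * q i <= (sample_count s i)%:R].
rewrite (bigD1 σ0) //=; apply: le_trans (_ : Ef q m eta u σ0 s <= _); last first.
  by rewrite lerDl; apply: sumr_ge0 => σ _; apply: expR_ge0.
have e : \sum_i sg σ0 i * ((sample_count s i)%:R - m * q i)
       = m * \sum_i `|q i - qhat m s i|.
  rewrite mulr_sumr; apply: eq_bigr => i _; rewrite /sg /σ0 ffunE /qhat.
  have -> : q i - (sample_count s i)%:R / m = - (((sample_count s i)%:R - m * q i) / m).
    by field; rewrite gt_eqF.
  rewrite normrN normrM (gtr0_norm (x := m^-1)) ?invr_gt0 //.
  rewrite mulrCA divff ?gt_eqF // mulr1.
  case: ifP => h.
    by rewrite mul1r ger0_norm // subr_ge0.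
  by rewrite ltr0_norm ?mulN1r // subr_lt0 ltNge h.
rewrite /Ef e; apply: le_trans (expR_ge1Dx _); rewrite lerDl.
apply: mulr_ge0; first exact: ltW.
rewrite -mulrBr; apply: mulr_ge0; first exact: ltW.
by rewrite subr_ge0 ltW //; rewrite /good_event -ltNge in ng.
Qed.

Definition Cf (R : realType) n (q : 'I_n -> R) (m eta u : R) (σ : {ffun 'I_n -> bool}) : R :=
  expR (- (u * m * \sum_i sg σ i * q i) - u * m * eta).

Definition af (R : realType) n (q : 'I_n -> R) (u : R) (σ : {ffun 'I_n -> bool}) : R :=
  \sum_i q i * expR (u * sg σ i).

Lemma Ef_fact (R : realType) n N (q : 'I_n -> R) (m eta u : R) σ (s : {ffun 'I_N -> 'I_n}) :
  Ef q m eta u σ s = Cf q m eta u σ * \prod_j expR (u * sg σ (s j)).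
Proof.
rewrite /Ef /Cf -expR_sum -expRD; congr expR.
have : \sum_i sg σ i * ((sample_count s i)%:R - m * q i)
   = \sum_j sg σ (s j) - m * \sum_i sg σ i * q i.
  rewrite -count_sum mulr_sumr -sumrB; apply: eq_bigr => i _; ring.
move=> ->; rewrite -mulr_sumr; ring.
Qed.

Lemma mgf (R : realType) n N (q : 'I_n -> R) (m eta u : R) σ :
  \sum_(s : {ffun 'I_N -> 'I_n}) sample_prob q s * Ef q m eta u σ s
  = Cf q m eta u σ * af q u σ ^+ N.
Proof.
under eq_bigr do rewrite Ef_fact mulrCA /sample_prob -big_split /=.
by rewrite -mulr_sumr (@dist_sum R n N (fun i => q i * expR (u * sg σ i))).
Qed.

Lemma bad_bound (R : realType) n N (q : 'I_n -> R) (m eta u : R) :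
  0 < m -> 0 < u -> (forall i, 0 <= q i) ->
  \sum_(s : {ffun 'I_N -> 'I_n} | ~~ good_event q m eta s) sample_prob q s
  <= \sum_σ Cf q m eta u σ * af q u σ ^+ N.
Proof.
move=> m0 u0 q0.
apply: le_trans (_ : \sum_(s : {ffun 'I_N -> 'I_n}) sample_prob q s * \sum_σ Ef q m eta u σ s <= _).
  rewrite [X in _ <= X](bigID (fun s => ~~ good_event q m eta s)) /=.
  apply: le_trans (_ : _ <= \sum_(s | ~~ good_event q m eta s) sample_prob q s * \sum_σ Ef q m eta u σ s) _.
    apply: ler_sum => s ng; rewrite ler_peMr //; first exact: sample_prob_ge0.
    exact: bad_le.
  rewrite lerDl; apply: sumr_ge0 => s _; apply: mulr_ge0; first exact: sample_prob_ge0.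
  by apply: sumr_ge0 => σ _; apply: expR_ge0.
under eq_bigr do rewrite mulr_sumr.
rewrite exchange_big /=; apply: ler_sum => σ _.
by rewrite mgf.
Qed.

Lemma good_eq (R : realType) n N (q : 'I_n -> R) (m eta : R) :
  \sum_i q i = 1 ->
  \sum_(s : {ffun 'I_N -> 'I_n} | good_event q m eta s) sample_prob q s
  = 1 - \sum_(s : {ffun 'I_N -> 'I_n} | ~~ good_event q m eta s) sample_prob q s.
Proof.
move=> q1.
have : \sum_(s : {ffun 'I_N -> 'I_n}) sample_prob q s = 1.
  by rewrite /sample_prob dist_sum q1 expr1n.
rewrite (bigID (fun s => good_event q m eta s)) /= => <-; ring.
Qed.
Lemma exp_partial_le (R : realType) (x : R) K : 0 <= x -> series (exp_coeff x) K <= expR x.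
Proof.
move=> x0; rewrite /expR.
apply: nondecreasing_cvgn_le; last exact: is_cvg_series_exp_coeff.
by apply: nondecreasing_series => k _ _; apply: exp_coeff_ge0.
Qed.

Lemma exp_quad (R : realType) (u : R) : 0 <= u -> 1 + u + u ^+ 2 / 2 <= expR u.
Proof.
move=> u0; have := @exp_partial_le R u 3 u0.
rewrite /series /= /exp_coeff /= !big_nat_recr //= big_nil.
rewrite expr0 expr1 /=.
by rewrite (_ : 2`!%:R = 2 :> R) // (_ : 1`!%:R = 1 :> R) // add0r !divr1.
Qed.

Lemma pade (R : realType) (u : R) : 0 <= u -> expR u * (2 - u) <= 2 + u.
Proof.
move=> u0.
pose f := fun x : R => 2 + x - expR x * (2 - x).
pose df := fun x : R => 1 - expR x * (1 - x).
have fd : forall x : R, is_derive x 1 f (df x).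
  move=> x; rewrite /f /df.
  apply: is_derive_eq.
  by rewrite /GRing.scale /=; ring.
have dd : forall x : R, derivable f x 1.
  by move=> x; apply: ex_derive; apply: fd.
have [c _ hc] := MVT_segment u0 (fun x _ => fd x)
  (derivable_within_continuous (fun x _ => dd x)).
have f0 : f 0 = 0 by rewrite /f expR0; ring.
have dfc : 0 <= df c.
  rewrite /df subr_ge0.
  have h1 := expR_ge1Dx (- c).
  have h2 : expR c * expR (- c) = 1 by rewrite expRxMexpNx_1.
  have h3 := expR_gt0 c.
  nra.
have : 0 <= f u.
  have -> : f u = df c * (u - 0) by rewrite -hc f0 subr0.
  by rewrite subr0 mulr_ge0.
rewrite /f; lra.
Qed.

Lemma Cbound (R : realType) n (q : 'I_n -> R) (m eta u : R) σ :
  0 < m -> (forall i, 0 <= q i) -> \sum_i q i = 1 ->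
  expR u - 1 - u <= eta - u -> expR (- u) - 1 + u <= eta - u ->
  Cf q m eta u σ * (expR (- m) * expR (m * af q u σ))
  <= expR (m * (eta - u - u * eta)).
Proof.
move=> m0 q0 q1 h1 h2.
have e : af q u σ - 1 - u * \sum_i sg σ i * q i
       = \sum_i q i * (expR (u * sg σ i) - 1 - u * sg σ i).
  rewrite [RHS](eq_bigr (fun i => q i * expR (u * sg σ i) - q i - u * (sg σ i * q i))); last first.
    by move=> i _; ring.
  by rewrite !sumrB -mulr_sumr q1.
have f : af q u σ - 1 - u * \sum_i sg σ i * q i <= eta - u.
  rewrite e; apply: le_trans (_ : \sum_i q i * (eta - u) <= _).
    apply: ler_sum => i _; apply: ler_wpM2l => //.
    by rewrite /sg; case: (σ i); rewrite ?mulr1 ?mulrN1 ?opprK.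
  by rewrite -mulr_suml q1 mul1r.
have g := ler_wpM2l (ltW m0) f.
rewrite /Cf -!expRD ler_expR; lra.
Qed.

Unset Implicit Arguments.
Set Strict Implicit.

Theorem lemma8 (R : realType) (n : nat) (eta delta : R) (q : 'I_n -> R) :
  0 < eta -> eta <= 1 / 8 -> 0 < delta -> delta < 1 ->
  (forall i, 0 <= q i) -> \sum_(i < n) q i = 1 ->
  ((1 - delta)%:E <= success_prob q (m_of n eta delta) eta)%E.
Proof.
move=> eta0 eta8 d0 d1 q0 q1.
set L := n%:R * ln 2 + ln (delta^-1).
have L0 : 0 < L.
  have a : 0 <= n%:R * ln (2 : R) by apply: mulr_ge0 => //; apply: ln_ge0; lra.
  have b : 0 < ln (delta^-1) by apply: ln_gt0; rewrite invf_gt1.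
  rewrite /L; lra.
set m := m_of n eta delta.
have mL : m * eta ^+ 2 = 213 / 100 * L.
  by rewrite /m /m_of -/L; field; rewrite gt_eqF.
have m0 : 0 < m.
  rewrite /m /m_of -/L; apply: mulr_gt0 => //; apply: mulr_gt0 => //.
  by rewrite invr_gt0 exprn_gt0.
clearbody m.
set u := 2 * eta / (2 + eta).
have ue : u * (2 + eta) = 2 * eta by rewrite /u; field; lra.
have u0 : 0 < u by rewrite /u divr_gt0 //; lra.
have u1 : u < 1.
  rewrite /u ltr_pdivrMr; lra.
have h1 : expR u - 1 - u <= eta - u.
  have p := pade (ltW u0).
  have : expR u * (2 - u) <= (1 + eta) * (2 - u) by nra.
  rewrite ler_pM2r; lra.
have h2 : expR (- u) - 1 + u <= eta - u.
  have p := exp_quad (ltW u0).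
  have eg := expR_gt0 u.
  have ee : expR (- u) * expR u = 1 by rewrite mulrC expRxMexpNx_1.
  have k : 1 <= (1 + eta - 2 * u) * (1 + u + u ^+ 2 / 2).
    have e2 : eta * (2 - u) = 2 * u by lra.
    nra.
  nra.
have hexp : m * (eta - u - u * eta) <= - L.
  have e3 : eta - u - u * eta = - (eta ^+ 2 / (2 + eta)).
    by rewrite /u; field; lra.
  rewrite e3 mulrN lerN2 mulrA mL ler_pdivlMr; last lra.
  nra.
clearbody u.
have hL : expR (- L) = delta / 2 ^+ n.
  rewrite /L opprD expRD expRN expRM_natl lnK ?posrE //.
  by rewrite lnV ?posrE ?invr_gt0 // opprK lnK ?posrE // mulrC.
have hσ : forall σ, Cf q m eta u σ * (expR (- m) * expR (m * af q u σ)) <= delta / 2 ^+ n.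
  move=> σ; rewrite -hL; apply: le_trans (Cbound σ m0 q0 q1 h1 h2) _.
  by rewrite ler_expR.
have hsum : \sum_(σ : {ffun 'I_n -> bool}) Cf q m eta u σ * (expR (- m) * expR (m * af q u σ)) <= delta.
  apply: le_trans (ler_sum _ (fun σ _ => hσ σ)) _.
  rewrite sumr_const card_ffun card_bool card_ord -(mulr_natr (delta / 2 ^+ n)) natrX.
  by rewrite divfK // expf_neq0.
have hpmf : forall N, poisson_pmf m N = expR (- m) * (m ^+ N / N`!%:R).
  by move=> N; rewrite /poisson_pmf m0 mulrC.
have hS : forall K, \sum_(0 <= N < K) poisson_pmf m N = expR (- m) * series (exp_coeff m) K.
  move=> K; rewrite /series /exp_coeff /= mulr_sumr.
  by apply: eq_bigr => N _; rewrite hpmf.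
have hpart : forall K, \sum_(0 <= N < K) poisson_pmf m N - delta <=
    \sum_(0 <= N < K) poisson_pmf m N *
      \sum_(s : {ffun 'I_N -> 'I_n} | good_event q m eta s) sample_prob q s.
  move=> K.
  have hb : \sum_(0 <= N < K) poisson_pmf m N *
      \sum_(s : {ffun 'I_N -> 'I_n} | ~~ good_event q m eta s) sample_prob q s <= delta.
    apply: le_trans (_ : _ <= \sum_(0 <= N < K) poisson_pmf m N *
        \sum_σ Cf q m eta u σ * af q u σ ^+ N) _.
      apply: ler_sum => N _; apply: ler_wpM2l; first exact: poisson_pmf_ge0.
      exact: bad_bound.
    under eq_bigr do rewrite mulr_sumr.
    rewrite exchange_big /=; apply: le_trans hsum; apply: ler_sum => σ _.
    have a0 : 0 <= af q u σ.
      by apply: sumr_ge0 => i _; apply: mulr_ge0 => //; apply: expR_ge0.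
    move: (af q u σ) a0 => A a0.
    apply: le_trans (_ : _ <= Cf q m eta u σ * (expR (- m) * series (exp_coeff (m * A)) K)) _.
      rewrite /series /exp_coeff /= !mulr_sumr le_eqVlt; apply/orP; left; apply/eqP.
      apply: eq_bigr => N _; rewrite hpmf exprMn; ring.
    apply: ler_wpM2l; first exact: expR_ge0.
    apply: ler_wpM2l; first exact: expR_ge0.
    apply: exp_partial_le; exact: mulr_ge0 (ltW m0) a0.
  rewrite [X in _ <= X](eq_bigr (fun N => poisson_pmf m N - poisson_pmf m N *
      \sum_(s : {ffun 'I_N -> 'I_n} | ~~ good_event q m eta s) sample_prob q s)); last first.
    by move=> N _; rewrite good_eq // mulrBr mulr1.
  rewrite sumrB; lra.
have hE : forall K, ((\sum_(0 <= N < K) poisson_pmf m N - delta)%:E <= success_prob q m eta)%E.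
  move=> K; apply: (@le_trans _ _ (\sum_(0 <= N < K) poisson_pmf m N *
      \sum_(s : {ffun 'I_N -> 'I_n} | good_event q m eta s) sample_prob q s)%:E).
    by rewrite lee_fin hpart.
  rewrite /success_prob -sumEFin; apply: nneseries_lim_ge => N _ _.
  rewrite lee_fin; apply: mulr_ge0; first exact: poisson_pmf_ge0.
  by apply: sumr_ge0 => s _; apply: sample_prob_ge0.
case E: (success_prob q m eta) => [r| |]; last 2 first.
- by rewrite leey.
- by have := hE 0%N; rewrite E big_geq // sub0r leeNy_eq.
have hr : forall K, series (exp_coeff m) K <= (r + delta) * expR m.
  move=> K; have := hE K; rewrite E lee_fin hS => h.
  have ee : expR m * expR (- m) = 1 by rewrite expRxMexpNx_1.
  have em := expR_gt0 m.
  have hh : expR (- m) * series (exp_coeff m) K <= r + delta by lra.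
  rewrite -[series _ K]mul1r -ee -mulrA mulrC.
  by rewrite ler_pM2r.
have hl : expR m <= (r + delta) * expR m.
  rewrite /expR; apply: limr_le; first exact: is_cvg_series_exp_coeff.
  by apply: nearW => K; apply: hr.
have em := expR_gt0 m.
rewrite lee_fin; nra.
Qed.
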